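(* Let $X$ be a topological space with $|X|\ge 2$ and $G$ an infinite Abelian group. If $X$ is not anti-discrete, then every Korovin orbit $G_f$ in $X^G$ is a $T_1$-space.
   Context: $X^G$ carries the product topology. For $f\in X^G$ and $g\in G$ let $gf\in X^G$ be given by $(gf)(x)=f(xg)$, and let $G_f=\{gf:g\in G\}\subseteq X^G$ with the subspace topology. The map $f\colon G\to X$ is a Korovin mapping if $\pi_M(G_f)=X^M$ for every countable $M\subseteq G$, where $\pi_M\colon X^G\to X^M$ is the projection; in that case $G_f$ is called a Korovin orbit. A space is anti-discrete if its only open sets are $\emptyset$ and the whole space. *)

(* Defs.v *)
From HB Require Import structures.
From mathcomp Require Import all_boot all_order all_algebra.
From mathcomp Require Import all_classical all_reals all_analysis.
Set Implicit Arguments. Unset Strict Implicit. Unset Printing Implicit Defensive.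
Import GRing.Theory.
Local Open Scope classical_set_scope.
Local Open Scope ring_scope.

(* (g f)(x) = f (x g), i.e. f (x + g) *)
Definition gshift {G : zmodType} {X : Type} (g : G) (f : G -> X) : G -> X :=
  fun x => f (x + g).

Definition korovin_orbit {G : zmodType} {X : topologicalType} (f : G -> X)
  : set {ptws G -> X} := [set gshift g f | g in [set: G]].

(* pi_M (G_f) = X^M for every countable M, X^M = functions M -> X *)
Definition korovin_mapping {G : zmodType} {X : Type} (f : G -> X) : Prop :=
  forall M : set G, countable M ->
    forall h : set_type M -> X, exists g : G,
      forall x : set_type M, gshift g f (set_val x) = h x.

Definition anti_discrete (X : topologicalType) : Prop :=
  forall U : set X, open U -> U = set0 \/ U = [set: X].

(* Main.v *)
Require Import Defs.
From HB Require Import structures.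
From mathcomp Require Import all_boot all_order all_algebra.
From mathcomp Require Import all_classical all_reals all_analysis.
Local Open Scope classical_set_scope.

Theorem proposition4p1 (X : topologicalType) (G : zmodType) (f : G -> X) :
  (exists x y : X, x <> y) ->
  infinite_set [set: G] ->
  ~ anti_discrete X ->
  korovin_mapping f ->
  accessible_space (set_type (korovin_orbit f)).
Proof.
move=> _ _ nad kor.
have [U [oU Un0 UnT]] : exists U : set X, [/\ open U, U <> set0 & U <> setT].
  apply: contra_notP nad => H V oV.
  have [->|V0] := pselect (V = set0); first by left.
  have [->|VT] := pselect (V = setT); first by right.
  by exfalso; apply: H; exists V.
have [a Ua] : exists a, U a by apply/set0P/eqP.
have [b nUb] : exists b, ~ U b.
  by apply: contra_notP UnT => H; apply/seteqP; split => // x _; apply: contra_notP H => ?; exists x.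
move=> [p1 P1] [p2 P2] neq.
have [g1 _ E1] := set_mem P1; have [g2 _ E2] := set_mem P2.
subst p1 p2.
pose d := (g1 - g2)%R.
have dn0 : d != 0%R.
  apply: contraNneq neq => /eqP; rewrite GRing.subr_eq0 => /eqP e.
  by apply/eqP; apply: eq_exist; rewrite e.
have cM : countable [set (0:G)%R; d] by apply: finite_set_countable; rewrite finite_setU; split; exact: finite_set1.
have [g Hg] := kor _ cM (fun z => if set_val z == 0%R then b else a).
have Hb : f g = b.
  have := Hg (exist _ (0:G)%R (mem_set (or_introl erefl))).
  by rewrite /gshift /= GRing.add0r eqxx.
have Ha : f (d + g)%R = a.
  have := Hg (exist _ d (mem_set (or_intror erefl))).
  by rewrite /gshift /= (negbTE dn0).
pose y := (g - g2)%R.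
pose p := fun phi : set_type (korovin_orbit f) => (set_val phi : {ptws G -> X}) y.
have pc : continuous p.
  move=> phi.
  apply: (@continuous_comp (set_type (korovin_orbit f)) {ptws G -> X} X
    set_val (fun h : {ptws G -> X} => h y) phi).
    exact: initial_continuous.
  exact: (@proj_continuous G (fun=> X) y).
exists (p @^-1` U); split.
- by apply: open_comp => // z _; exact: pc.
- rewrite inE /p /= /gshift /y.
  change (U (f (g - g2 + g1)%R)).
  have E : (g - g2 + g1 = d + g)%R.
    by rewrite /d GRing.addrAC (GRing.addrC g) GRing.addrAC.
  by rewrite E Ha.
- rewrite inE /p /=.
  change (~ U (f (g - g2 + g2)%R)).
  by rewrite GRing.subrK Hb.
Qed.
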